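(* Let $n\ge 2$, $s=n^2-1$. Let $G\in\mathbb{C}^{s\times s}$ be antisymmetric (regarded as a matrix of operators by attaching the identity operator to each entry), and let $x=(x_1,\dots,x_s)^T$ be a vector of linearly independent operators on $\mathbb{C}^n$ (such as the generalized Gell-Mann matrices). If $$G\,\Theta^-(x)+\Theta^-(x)\,G^T-\Theta^-(Gx)=0,$$ then there exists $g$ such that $G=\Theta^-(g)$, and this $g$ is unique and given by $$g=-\frac{1}{n}\begin{pmatrix}\mathrm{Tr}(F_1G)\\ \vdots\\ \mathrm{Tr}(F_sG)\end{pmatrix}.$$ Conversely, if $G=\Theta^-(g)$ for some $g$, then $G\Theta^-(x)+\Theta^-(x)G^T-\Theta^-(Gx)=0$ holds for every vector $x$ of $s$ operators.
   Context: Let $\lambda_1,\dots,\lambda_s$ be the generalized Gell-Mann matrices (a basis of traceless Hermitian $n\times n$ matrices with $\mathrm{Tr}(\lambda_i\lambda_j)=2\delta_{ij}$), with real structure constants $f_{ijk}$ (completely antisymmetric) and $d_{ijk}$ (completely symmetric) defined by $[\lambda_i,\lambda_j]=2\mathbf{i}\sum_k f_{ijk}\lambda_k$, $\lambda_i\lambda_j+\lambda_j\lambda_i=\frac{4}{n}\delta_{ij}I+2\sum_k d_{ijk}\lambda_k$. $F_i\in\mathbb{R}^{s\times s}$ has entries $(F_i)_{jk}=f_{ijk}$. For a vector $\beta$ of $s$ complex numbers or operators, $\Theta^-(\beta)$ is the $s\times s$ array whose $j$-th column is $F_j^T\beta$, i.e. $\Theta^-(\beta)_{ij}=\sum_k f_{ijk}\beta_k$.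 Products of complex matrices with operator arrays are taken entrywise with the identity operator attached to complex entries. *)

(* Defs.v *)
From mathcomp Require Import all_boot all_algebra complex reals.
Set Implicit Arguments. Unset Strict Implicit. Unset Printing Implicit Defensive.
Import GRing.Theory Num.Theory.
Local Open Scope ring_scope.
Local Open Scope complex_scope.

Definition sdim (n : nat) : nat := (n ^ 2 - 1)%N.

Section Defs.
Variables (R : realType) (n : nat).
Local Notation s := (sdim n).
Local Notation C := (R[i]).

Definition gellmann_data (lam : 'I_s -> 'M[C]_n) (f : 'I_s -> 'I_s -> 'I_s -> R) : Prop :=
  [/\ (forall a, map_mx conjc (lam a)^T = lam a),
      (forall a, \tr (lam a) = 0),
      (forall a b, \tr (lam a *m lam b) = 2 * (a == b)%:R)
    & (forall a b, lam a *m lam b - lam b *m lam a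
                   = (2 * 'i) *: \sum_k ((f a b k)%:C *: lam k))].

Definition structF (f : 'I_s -> 'I_s -> 'I_s -> R) (a : 'I_s) : 'M[C]_s :=
  \matrix_(j, k) (f a j k)%:C.

Definition Theta (f : 'I_s -> 'I_s -> 'I_s -> R) (g : 'cV[C]_s) : 'M[C]_s :=
  \matrix_(a, b) \sum_k (f a b k)%:C * g k 0.

Definition ThetaOp (f : 'I_s -> 'I_s -> 'I_s -> R) (x : 'I_s -> 'M[C]_n)
  : 'I_s -> 'I_s -> 'M[C]_n :=
  fun a b => \sum_k (f a b k)%:C *: x k.

Definition applyOp (G : 'M[C]_s) (x : 'I_s -> 'M[C]_n) : 'I_s -> 'M[C]_n :=
  fun l => \sum_m G l m *: x m.

(* entrywise: G Theta^-(x) + Theta^-(x) G^T - Theta^-(G x) = 0 *)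
Definition theta_eq (f : 'I_s -> 'I_s -> 'I_s -> R) (G : 'M[C]_s) (x : 'I_s -> 'M[C]_n) : Prop :=
  forall a b,
    \sum_k G a k *: ThetaOp f x k b + \sum_k G b k *: ThetaOp f x a k
    - ThetaOp f (applyOp G x) a b = 0.

Definition lin_indep (x : 'I_s -> 'M[C]_n) : Prop :=
  forall c : 'I_s -> C, \sum_k c k *: x k = 0 -> forall k, c k = 0.

Definition gform (f : 'I_s -> 'I_s -> 'I_s -> R) (G : 'M[C]_s) : 'cV[C]_s :=
  \col_a (- (n%:R)^-1 * \tr (structF f a *m G)).

End Defs.

(* Main.v *)
Require Import Defs.
From mathcomp Require Import all_boot all_algebra complex reals.
From mathcomp Require Import ring.
Import GRing.Theory Num.Theory.
Local Open Scope ring_scope.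
Local Open Scope complex_scope.

Set Implicit Arguments. Unset Strict Implicit.

Section S2.
Variables (C : fieldType) (s : nat) (nn : C).
Hypothesis hnn : nn != 0.
Variable phi : 'I_s -> 'I_s -> 'I_s -> C.
Hypothesis hC : forall a b c, phi b c a = phi a b c.
Hypothesis hN : forall a b c, phi b a c = - phi a b c.
Hypothesis hN2 : forall a b c, phi a c b = - phi a b c.
Hypothesis hJ : forall a b c l,
  \sum_k (phi a b k * phi k c l + phi b c k * phi k a l + phi c a k * phi k b l) = 0.
Hypothesis hK : forall a b, \sum_j \sum_k phi a j k * phi b j k = nn * (a == b)%:R.

Lemma sum_delta' m (F : 'I_m -> C) i : \sum_j (j == i)%:R * F j = F i.
Proof.
rewrite (bigD1 i) //= eqxx mul1r big1 ?addr0 // => j /negbTE ji.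
by rewrite ji mul0r.
Qed.

Definition deriv (G : 'M[C]_s) := forall a b l,
  \sum_k G a k * phi k b l + \sum_k G b k * phi a k l - \sum_k phi a b k * G k l = 0.

Definition Th (g : 'cV[C]_s) : 'M[C]_s := \matrix_(a, b) \sum_k phi a b k * g k 0.

Lemma sum3_rev (F : 'I_s -> 'I_s -> 'I_s -> C) :
  \sum_i \sum_j \sum_k F i j k = \sum_k \sum_j \sum_i F i j k.
Proof.
under eq_bigr do rewrite exchange_big.
rewrite exchange_big; apply: eq_bigr => k _; by rewrite exchange_big.
Qed.

Lemma deriv_Th g : deriv (Th g).
Proof.
move=> a b l.
have E : forall (H : 'I_s -> 'I_s -> C),
    \sum_k (\sum_m H k m * g m 0) = \sum_m g m 0 * \sum_k H k m.
  move=> H; rewrite exchange_big; apply: eq_bigr => m _.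
  rewrite big_distrr /=; apply: eq_bigr => k _; ring.
have -> : \sum_k Th g a k * phi k b l = \sum_m g m 0 * \sum_k phi a k m * phi k b l.
  rewrite -(E (fun k m => phi a k m * phi k b l)); apply: eq_bigr => k _.
  by rewrite mxE big_distrl /=; apply: eq_bigr => m _; ring.
have -> : \sum_k Th g b k * phi a k l = \sum_m g m 0 * \sum_k phi b k m * phi a k l.
  rewrite -(E (fun k m => phi b k m * phi a k l)); apply: eq_bigr => k _.
  by rewrite mxE big_distrl /=; apply: eq_bigr => m _; ring.
have -> : \sum_k phi a b k * Th g k l = \sum_m g m 0 * \sum_k phi a b k * phi k l m.
  rewrite -(E (fun k m => phi a b k * phi k l m)); apply: eq_bigr => k _.
  by rewrite mxE big_distrr /=; apply: eq_bigr => m _; ring.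
rewrite -big_split -sumrB /=; apply: big1 => m _.
rewrite -mulrDr -mulrBr -big_split -sumrB /=.
have -> : \sum_k (phi a k m * phi k b l + phi b k m * phi a k l - phi a b k * phi k l m)
   = \sum_k (phi a b k * phi k m l + phi b m k * phi k a l + phi m a k * phi k b l).
  apply: eq_bigr => k _.
  rewrite (hC m a k) (hN2 b m k) (hN k a l) (hN2 k m l); ring.
by rewrite hJ mulr0.
Qed.

Lemma deriv_zero G : deriv G ->
  (forall a, \sum_j \sum_k phi a j k * G k j = 0) -> G = 0.
Proof.
move=> hD hT; apply/matrixP => c d; rewrite mxE.
apply: (mulfI hnn); rewrite mulr0.
have S1 : nn * G c d = \sum_j \sum_k (\sum_b G c b * phi b j k) * phi d j k.
  transitivity (\sum_b G c b * (\sum_j \sum_k phi b j k * phi d j k)).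
    rewrite (eq_bigr (fun b => nn * ((b == d)%:R * G c b))); last by move=> b _; rewrite hK; ring.
    by rewrite -big_distrr /= sum_delta'.
  transitivity (\sum_b \sum_j \sum_k G c b * (phi b j k * phi d j k)).
    apply: eq_bigr => b _; rewrite big_distrr /=; apply: eq_bigr => j _.
    by rewrite big_distrr.
  rewrite exchange_big; apply: eq_bigr => j _.
  rewrite exchange_big; apply: eq_bigr => k _.
  rewrite big_distrl /=; apply: eq_bigr => b _; ring.
have S2 : forall j k, \sum_b G c b * phi b j k
   = \sum_p phi c j p * G p k - \sum_b G j b * phi c b k.
  move=> j k; have /eqP := hD c j k; rewrite subr_eq0 => /eqP <-.
  by rewrite addrK.
have A : \sum_j \sum_k (\sum_p phi c j p * G p k) * phi d j k
   = \sum_p \sum_k \sum_j G p k * (phi c j p * phi d j k).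
  rewrite -sum3_rev; apply: eq_bigr => j _.
  apply: eq_bigr => k _; rewrite big_distrl /=; apply: eq_bigr => p _; ring.
have B : \sum_j \sum_k (\sum_b G j b * phi c b k) * phi d j k
   = \sum_p \sum_k \sum_j G p k * (phi c k j * phi d p j).
  apply: eq_bigr => p _; rewrite exchange_big.
  apply: eq_bigr => k _; rewrite big_distrl /=; apply: eq_bigr => j _; ring.
have S3 : nn * G c d = \sum_p \sum_k G p k * (- \sum_j phi c d j * phi j k p).
  rewrite S1.
  under eq_bigr do under eq_bigr do rewrite S2 mulrBl.
  under eq_bigr do rewrite sumrB.
  rewrite sumrB A B -sumrB; apply: eq_bigr => p _.
  rewrite -sumrB; apply: eq_bigr => k _.
  rewrite -sumrB; under eq_bigr do rewrite -mulrBr.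
  rewrite -big_distrr /=; congr (_ * _).
  apply/eqP; rewrite -addr_eq0 -big_split /=; apply/eqP.
  rewrite -[in RHS](hJ c d k p); apply: eq_bigr => j _.
  rewrite (hN2 d j k) (hN c j p) (hN c k j) (hC j d p); ring.
rewrite S3.
transitivity (\sum_p \sum_k \sum_j (- phi c d j) * (phi j k p * G p k)).
  apply: eq_bigr => p _; apply: eq_bigr => k _.
  rewrite -sumrN big_distrr /=; apply: eq_bigr => j _; ring.
rewrite sum3_rev; apply: big1 => j _.
rewrite -[RHS](mulr0 (- phi c d j)) -[in RHS](hT j) big_distrr /=; apply: eq_bigr => k _.
by rewrite big_distrr.
Qed.

Lemma sum_delta m (F : 'I_m -> C) i : \sum_j (i == j)%:R * F j = F i.
Proof. by under eq_bigr do rewrite eq_sym; apply: sum_delta'. Qed.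

Lemma tr_Th g a : \sum_j \sum_k phi a j k * Th g k j = - nn * g a 0.
Proof.
transitivity (\sum_j \sum_k \sum_m (- (phi a j k * phi m j k)) * g m 0).
  apply: eq_bigr => j _; apply: eq_bigr => k _; rewrite mxE big_distrr /=.
  apply: eq_bigr => m _; rewrite (hC m k j) (hN2 m j k); ring.
rewrite sum3_rev.
transitivity (\sum_m (a == m)%:R * (- nn * g m 0)); last by rewrite sum_delta.
apply: eq_bigr => m _; rewrite exchange_big /=.
transitivity (- (\sum_j \sum_k phi a j k * phi m j k) * g m 0); last by rewrite hK; ring.
rewrite -sumrN big_distrl /=; apply: eq_bigr => j _.
rewrite -sumrN big_distrl /=; apply: eq_bigr => k _; ring.
Qed.

Lemma deriv_sub G H : deriv G -> deriv H -> deriv (G - H).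
Proof.
move=> hG hH a b l.
under eq_bigr do rewrite !mxE mulrBl.
under [X in _ + X - _ = _]eq_bigr do rewrite !mxE mulrBl.
under [X in _ - X = _]eq_bigr do rewrite !mxE mulrBr.
rewrite !sumrB.
move: (hG a b l) (hH a b l).
set A1 := \sum_k G a k * _; set B1 := \sum_k G b k * _; set C1 := \sum_k _ * G k l.
set A2 := \sum_k H a k * _; set B2 := \sum_k H b k * _; set C2 := \sum_k _ * H k l.
move=> eG eH.
have -> : A1 - A2 + (B1 - B2) - (C1 - C2) = (A1 + B1 - C1) - (A2 + B2 - C2) by ring.
by rewrite eG eH subr0.
Qed.

Lemma theta_expand (V : lmodType C) (G : 'M[C]_s) (x : 'I_s -> V) a b :
  \sum_k G a k *: (\sum_l phi k b l *: x l) + \sum_k G b k *: (\sum_l phi a k l *: x l)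
  - \sum_l phi a b l *: (\sum_m G l m *: x m)
  = \sum_l (\sum_k G a k * phi k b l + \sum_k G b k * phi a k l
            - \sum_k phi a b k * G k l) *: x l.
Proof.
have E : forall (H : 'I_s -> 'I_s -> C),
  \sum_k (\sum_l H k l *: x l) = \sum_l (\sum_k H k l) *: x l.
  move=> H; rewrite exchange_big; apply: eq_bigr => l _; by rewrite scaler_suml.
under eq_bigr do rewrite scaler_sumr.
under [X in _ + X - _ = _]eq_bigr do rewrite scaler_sumr.
under [X in _ - X = _]eq_bigr do rewrite scaler_sumr.
under eq_bigr do under eq_bigr do rewrite scalerA.
under [X in _ + X - _ = _]eq_bigr do under eq_bigr do rewrite scalerA.
under [X in _ - X = _]eq_bigr do under eq_bigr do rewrite scalerA.
rewrite !E -big_split -sumrB /=; apply: eq_bigr => l _.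
by rewrite scalerBl scalerDl.
Qed.
End S2.

Lemma zj (V : zmodType) (x1 x2 x3 x4 x5 x6 : V) :
  (x1 - x2 - (x3 - x4)) + (x5 - x4 - (x1 - x6)) + (x3 - x6 - (x5 - x2)) = 0.
Proof.
rewrite !opprB !addrA.
rewrite -!(addrAC _ x2) addrK.
rewrite -!(addrAC _ (-x4)) subrK.
rewrite -!(addrAC _ (-x1)) subrr add0r.
rewrite -!(addrAC _ x3) addNr add0r.
by rewrite addrK subrr.
Qed.

Section S.
Variables (C : fieldType) (n : nat) (hn : (2 <= n)%N).
Hypothesis hnC : (n%:R : C) != 0.
Hypothesis h2C : (2 : C) != 0.
Variable ii : C.
Hypothesis hii : ii * ii = -1.
Local Notation s := (sdim n).
Variables (lam : 'I_s -> 'M[C]_n).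
Hypothesis htr : forall a, \tr (lam a) = 0.
Hypothesis hort : forall a b, \tr (lam a *m lam b) = 2 * (a == b)%:R.

Lemma n_neq0 : (n%:R : C) != 0.
Proof. exact: hnC. Qed.

Lemma two_neq0 : (2 : C) != 0.
Proof. exact: h2C. Qed.

Lemma tr_comb (c : 'I_s -> C) m : \tr ((\sum_k c k *: lam k) *m lam m) = 2 * c m.
Proof.
rewrite mulmx_suml raddf_sum /= (bigD1 m) //= big1 ?addr0.
  by rewrite -scalemxAl mxtraceZ hort eqxx mulr1 mulrC.
by move=> k /negbTE kn; rewrite -scalemxAl mxtraceZ hort kn mulr0 mulr0.
Qed.

Lemma lam_indep (c : 'I_s -> C) : \sum_k c k *: lam k = 0 -> forall m, c m = 0.
Proof.
move=> H m; have := tr_comb c m; rewrite H mul0mx mxtrace0 => /esym/eqP.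
by rewrite mulf_eq0 (negbTE two_neq0) /= => /eqP.
Qed.

Definition hX (i : 'I_s.+1) : 'M[C]_n :=
  if unlift ord0 i is Some k then lam k else 1%:M.

Lemma sum_hX (c : 'I_s.+1 -> C) :
  \sum_i c i *: hX i = c ord0 *: 1%:M + \sum_k c (lift ord0 k) *: lam k.
Proof.
rewrite big_ord_recl /hX unlift_none; congr (_ + _).
by apply: eq_bigr => k _; rewrite liftK.
Qed.

Lemma s1E : s.+1 = (n * n)%N.
Proof. by rewrite /sdim subn1 prednK ?mulnn // expn_gt0; case: n hn. Qed.

Lemma spanning (M : 'M[C]_n) :
  exists d (c : 'I_s -> C), M = d *: 1%:M + \sum_k c k *: lam k.
Proof.
pose X := mktuple hX.
have fX : free X.
  apply/freeP => k; rewrite (eq_bigr (fun i => k i *: hX i)); last first.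
    by move=> i _; rewrite -tnth_nth tnth_mktuple.
  rewrite sum_hX => H.
  have Hc : forall m, k (lift ord0 m) = 0.
    move=> m; have := congr1 (fun A => \tr (A *m lam m)) H.
    rewrite /= mulmxDl -scalemxAl mul1mx mxtraceD mxtraceZ htr mulr0 add0r tr_comb.
    rewrite mul0mx mxtrace0 => /eqP; rewrite mulf_eq0 (negbTE two_neq0) /= => /eqP //.
  have H0 : k ord0 = 0.
    have : \sum_k0 k (lift ord0 k0) *: lam k0 = 0.
      by apply: big1 => m _; rewrite Hc scale0r.
    move=> E; move: H; rewrite E addr0 => /(congr1 (fun A => \tr A)).
    rewrite /= mxtraceZ mxtrace1 mxtrace0 => /eqP; rewrite mulf_eq0 => /orP[/eqP //|].
    by rewrite (negbTE n_neq0).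
  by move=> i; case: (unliftP ord0 i) => [j ->|->].
have spX : M \in <<X>>%VS.
  have : (<<X>> == fullv)%VS.
    rewrite eqEdim subvf dimvf /=.
    move: fX; rewrite /free => /eqP ->; rewrite size_tuple dim_matrix s1E //.
  by move/eqP ->; apply: memvf.
exists (coord X ord0 M), (fun k => coord X (lift ord0 k) M).
rewrite {1}(coord_span spX) (eq_bigr (fun i => coord X i M *: hX i)); last first.
  by move=> i _; rewrite -tnth_nth tnth_mktuple.
by rewrite sum_hX.
Qed.

Lemma tr_delta (p q : 'I_n) (B : 'M[C]_n) : \tr (delta_mx p q *m B) = B q p.
Proof.
rewrite /mxtrace (bigD1 p) //= big1 ?addr0.
  rewrite mxE (bigD1 q) //= big1 ?addr0; first by rewrite mxE !eqxx mul1r.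
  by move=> j /negbTE jq; rewrite mxE jq andbF mul0r.
move=> i /negbTE ip; rewrite mxE big1 // => j _; by rewrite mxE ip mul0r.
Qed.

Lemma completeness (p q r t : 'I_n) :
  \sum_k lam k p q * lam k r t
  = 2 * ((q == r)%:R * (p == t)%:R) - 2 / n%:R * ((q == p)%:R * (r == t)%:R).
Proof.
have [d [c E]] := spanning (delta_mx q p).
have Hc : forall m, c m = lam m p q / 2.
  move=> m; have := congr1 (fun A => \tr (A *m lam m)) E.
  rewrite /= tr_delta mulmxDl -scalemxAl mul1mx mxtraceD mxtraceZ htr mulr0 add0r.
  rewrite tr_comb => ->; rewrite mulrC mulKf //; exact: two_neq0.
have Hd : d = (q == p)%:R / n%:R.
  have := congr1 (fun A => \tr A) E; rewrite /= mxtraceD raddf_sum /= mxtraceZ mxtrace1.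
  rewrite big1 ?addr0; last by move=> k _; rewrite mxtraceZ htr mulr0.
  rewrite /mxtrace (bigD1 q) //= big1 ?addr0; last by move=> i /negbTE iq; rewrite mxE iq.
  by rewrite mxE eqxx /= => ->; rewrite mulfK // n_neq0.
have H0 : ((r == q) && (t == p))%:R = d * (r == t)%:R + \sum_k c k * lam k r t.
  have := congr1 (fun A : 'M[C]_n => A r t) E; rewrite /= mxE => ->.
  rewrite !(mxE, summxE); congr (_ + _); apply: eq_bigr => k _; rewrite mxE //.
move: H0; under eq_bigr do rewrite Hc mulrAC; rewrite -big_distrl /= Hd => H0.
set S := \sum_k _ in H0 *.
have -> : S = 2 * (S / 2) by rewrite mulrC divfK // two_neq0.
rewrite (eq_sym q r) (eq_sym p t) -natrM mulnb.
have -> : S / 2 = ((r == q) && (t == p))%:R - (q == p)%:R / n%:R * (r == t)%:R.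
  by rewrite H0 addrAC subrr add0r.
by rewrite mulrBr mulrA mulrA mulrA [2 * _ * _]mulrAC -mulrA.
Qed.

Lemma Qlem (X : 'M[C]_n) :
  \sum_j lam j *m X *m lam j = (2 * \tr X) *: 1%:M - (2 / n%:R) *: X.
Proof.
apply/matrixP => p t; rewrite summxE !mxE.
under eq_bigr do rewrite mxE; under eq_bigr do under eq_bigr do rewrite mxE big_distrl /=.
under eq_bigr do rewrite exchange_big /=.
rewrite exchange_big /=; under eq_bigr do rewrite exchange_big /=.
under eq_bigr do under eq_bigr do under eq_bigr do rewrite mulrAC.
under eq_bigr do under eq_bigr do rewrite -big_distrl /= completeness.
under eq_bigr do under eq_bigr do rewrite mulrBl.
under eq_bigr do rewrite sumrB; rewrite sumrB.
congr (_ - _).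
  transitivity (\sum_i \sum_j (i == j)%:R * (2 * (p == t)%:R * X i j)).
    by apply: eq_bigr => i _; apply: eq_bigr => j _; ring.
  under eq_bigr do rewrite sum_delta.
  by rewrite /mxtrace mulrAC big_distrr /=; apply: eq_bigr => i _; ring.
transitivity (\sum_i (i == p)%:R * (\sum_j (j == t)%:R * (2 / n%:R * X i j))).
  apply: eq_bigr => i _; rewrite big_distrr /=; apply: eq_bigr => j _; ring.
by rewrite sum_delta' sum_delta'.
Qed.

Lemma i_neq0 : ii != 0.
Proof. by apply/eqP => i0; move: hii; rewrite i0 mul0r => /eqP; rewrite eq_sym oppr_eq0 oner_eq0. Qed.

Variable phi : 'I_s -> 'I_s -> 'I_s -> C.
Hypothesis hcomm : forall a b, lam a *m lam b - lam b *m lam a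
                   = (2 * ii) *: \sum_k (phi a b k *: lam k).

Definition K (A B : 'M[C]_n) := A *m B - B *m A.

Lemma K_suml (c : 'I_s -> C) B : K (\sum_k c k *: lam k) B = \sum_k c k *: K (lam k) B.
Proof.
rewrite /K mulmx_suml mulmx_sumr -sumrB; apply: eq_bigr => k _.
by rewrite -scalemxAl -scalemxAr scalerBr.
Qed.

Lemma KZl x A B : K (x *: A) B = x *: K A B.
Proof. by rewrite /K -scalemxAl -scalemxAr scalerBr. Qed.

Lemma KK a b c : K (K (lam a) (lam b)) (lam c) =
  \sum_l ((2 * ii) ^+ 2 * \sum_k phi a b k * phi k c l) *: lam l.
Proof.
rewrite [K (lam a) _]/K hcomm KZl K_suml.
under eq_bigr do rewrite /K hcomm scalerA.
under eq_bigr do rewrite scaler_sumr.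
rewrite exchange_big scaler_sumr; apply: eq_bigr => l _.
rewrite scaler_sumr; under eq_bigr do rewrite !scalerA.
rewrite -scaler_suml; congr (_ *: _); rewrite big_distrr /=.
by apply: eq_bigr => k _; ring.
Qed.

Lemma jacobi a b c l :
  \sum_k (phi a b k * phi k c l + phi b c k * phi k a l + phi c a k * phi k b l) = 0.
Proof.
have H : K (K (lam a) (lam b)) (lam c) + K (K (lam b) (lam c)) (lam a)
       + K (K (lam c) (lam a)) (lam b) = 0.
  by rewrite /K !mulmxBl !mulmxBr !mulmxA zj.
rewrite !KK -!big_split /= in H; move: H; under eq_bigr do rewrite -!scalerDl; move=> H.
have := lam_indep H l; rewrite -!mulrDr -!big_split /= => /eqP.
rewrite mulf_eq0 expf_eq0 /= mulf_eq0 (negbTE two_neq0) (negbTE i_neq0) /=.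
by move/eqP.
Qed.

Lemma T_eq a b c : \tr (K (lam a) (lam b) *m lam c) = (2 * ii) * (2 * phi a b c).
Proof. by rewrite /K hcomm -scalemxAl mxtraceZ tr_comb. Qed.

Lemma c4_neq0 : (2 * ii) * 2 != 0 :> C.
Proof. by rewrite !mulf_neq0 // ?two_neq0 ?i_neq0. Qed.

Lemma phi_of_T a b c : phi a b c = \tr (K (lam a) (lam b) *m lam c) / ((2 * ii) * 2).
Proof. by rewrite T_eq mulrA mulrC mulKf // c4_neq0. Qed.

Lemma phiN a b c : phi b a c = - phi a b c.
Proof.
rewrite !phi_of_T -mulNr; congr (_ / _).
by rewrite /K -[in RHS]linearN /= -[in RHS]mulNmx opprB.
Qed.

Lemma rot4 (A B D E : 'M[C]_n) : \tr (A *m B *m D *m E) = \tr (B *m D *m E *m A).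
Proof. by rewrite -!mulmxA mxtrace_mulC !mulmxA. Qed.

Lemma rot3 (A B D : 'M[C]_n) : \tr (A *m B *m D) = \tr (B *m D *m A).
Proof. by rewrite -!mulmxA mxtrace_mulC !mulmxA. Qed.

Lemma phiC a b c : phi b c a = phi a b c.
Proof.
rewrite !phi_of_T; congr (_ / _).
rewrite /K !mulmxBl !linearB /=.
by rewrite -(rot3 (lam a) (lam b) (lam c)) (rot3 (lam c) (lam b) (lam a)).
Qed.

Lemma phiN2 a b c : phi a c b = - phi a b c.
Proof. by rewrite -[LHS]phiC phiN phiC. Qed.

Lemma trK_j a b j :
  \tr (K (lam b) (lam j) *m K (lam a) (lam j)) =
  2 * \tr (lam b *m (lam j *m lam a *m lam j))
  - (\tr ((lam a *m lam b + lam b *m lam a) *m (lam j *m lam j))).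
Proof.
rewrite /K !mulmxBl !mulmxBr !mulmxDl !linearB !linearD /= !mulmxA.
rewrite (rot4 (lam j) (lam b) (lam j)).
rewrite -(rot4 (lam a) (lam b) (lam j) (lam j)).
rewrite (rot4 (lam j) (lam b) (lam a)).
ring.
Qed.

Lemma sum_phi2 a b j :
  \sum_k phi a j k * phi b j k = - (\tr (K (lam b) (lam j) *m K (lam a) (lam j))) / 8.
Proof.
have -> : \tr (K (lam b) (lam j) *m K (lam a) (lam j))
         = (2 * ii) * \sum_k phi a j k * ((2 * ii) * (2 * phi b j k)).
  rewrite [K (lam a) _]/K hcomm -scalemxAr mxtraceZ mulmx_sumr raddf_sum /=.
  congr (_ * _); apply: eq_bigr => k _; by rewrite -scalemxAr mxtraceZ T_eq.
have h8 : (8 : C) != 0.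
  have -> : (8 : C) = 2 * 2 * 2 by rewrite -!natrM.
  by rewrite !mulf_neq0 // two_neq0.
rewrite big_distrr /= mulNr big_distrl /= -sumrN; apply: eq_bigr => k _.
apply: (mulIf h8); rewrite mulNr divfK //.
have -> : (2 * ii * (phi a j k * (2 * ii * (2 * phi b j k)))) =
          8 * (ii * ii) * (phi a j k * phi b j k) by ring.
rewrite hii; ring.
Qed.

Lemma killing a b : \sum_j \sum_k phi a j k * phi b j k = n%:R * (a == b)%:R.
Proof.
under eq_bigr do rewrite sum_phi2 trK_j.
rewrite -big_distrl /= sumrN sumrB -big_distrr /=.
have E1 : \sum_j \tr (lam b *m (lam j *m lam a *m lam j)) = - (2 / n%:R) * (2 * (a == b)%:R).
  rewrite -raddf_sum /= -mulmx_sumr Qlem htr mulr0 scale0r sub0r mulmxN -scalemxAr.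
  by rewrite linearN /= mxtraceZ hort eq_sym mulNr.
have E2 : \sum_j \tr ((lam a *m lam b + lam b *m lam a) *m (lam j *m lam j))
          = (2 * n%:R - 2 / n%:R) * (2 * (a == b)%:R + 2 * (a == b)%:R).
  have Hj : forall j, lam j *m lam j = lam j *m 1%:M *m lam j by move=> j; rewrite mulmx1.
  under eq_bigr => j _ do rewrite Hj.
  rewrite -raddf_sum /= -mulmx_sumr Qlem mxtrace1.
  rewrite -scalerBl scalemx1 mul_mx_scalar mxtraceZ linearD /= !hort (eq_sym b a) //.
rewrite E1 E2.
have h8 : (8 : C) != 0.
  have -> : (8 : C) = 2 * 2 * 2 by rewrite -!natrM.
  by rewrite !mulf_neq0 // two_neq0.
by field; rewrite h8 n_neq0.
Qed.
End S.


Lemma mxB_entry (C : fieldType) m (A B : 'M[C]_m) i j : (A - B) i j = A i j - B i j.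
Proof. by rewrite !mxE. Qed.

Unset Implicit Arguments.
Set Strict Implicit.

Theorem lemma3 (R : realType) (n : nat) (hn : (2 <= n)%N)
    (lam : 'I_(sdim n) -> 'M[R[i]]_n) (f : 'I_(sdim n) -> 'I_(sdim n) -> 'I_(sdim n) -> R)
    (Hlam : gellmann_data lam f) :
  (forall (G : 'M[R[i]]_(sdim n)) (x : 'I_(sdim n) -> 'M[R[i]]_n),
      G^T = - G -> lin_indep x -> theta_eq f G x ->
      (exists g : 'cV[R[i]]_(sdim n), G = Theta f g) /\
      (forall g : 'cV[R[i]]_(sdim n), G = Theta f g -> g = gform f G))
  /\
  (forall (G : 'M[R[i]]_(sdim n)) (g : 'cV[R[i]]_(sdim n)),
      G = Theta f g -> forall x : 'I_(sdim n) -> 'M[R[i]]_n, theta_eq f G x).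
Proof.
case: Hlam => _ htr hort hcomm.
pose phi a b c := ((f a b c)%:C : R[i]).
have hnC : (n%:R : R[i]) != 0 by rewrite pnatr_eq0 -lt0n (leq_trans _ hn).
have h2C : (2 : R[i]) != 0 by rewrite pnatr_eq0.
have hii : ('i : R[i]) * 'i = -1 by rewrite -expr2 sqr_i.
have hC := @phiC _ _ h2C _ hii _ hort phi hcomm.
have hN := @phiN _ _ h2C _ hii _ hort phi hcomm.
have hN2 := @phiN2 _ _ h2C _ hii _ hort phi hcomm.
have hJ := @jacobi _ _ h2C _ hii _ hort phi hcomm.
have hK := @killing _ _ hn hnC h2C _ hii _ htr hort phi hcomm.
have hTh : forall g, Theta f g = Th phi g by [].
have hTr : forall G a, \tr (structF f a *m G) = \sum_j \sum_k phi a j k * G k j.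
  by move=> G a; rewrite /mxtrace; apply: eq_bigr => j _; rewrite mxE; apply: eq_bigr => k _; rewrite mxE.
have trTh := @tr_Th _ _ _ phi hC hN2 hK.
split.
  move=> G x _ hx hth.
  have hD : deriv phi G.
    move=> a b l; have := hth a b.
    rewrite /ThetaOp /applyOp (theta_expand phi G x a b) => /hx; apply.
  have uniq : forall g, G = Theta f g -> g = gform f G.
    move=> g ->; apply/matrixP => a z; rewrite ord1 mxE hTr hTh trTh.
    by field; rewrite hnC.
  split => //; exists (gform f G).
  apply/eqP; rewrite -subr_eq0; apply/eqP.
  apply: (@deriv_zero _ _ _ hnC phi hC hN hN2 hJ hK).
    by apply: deriv_sub => //; apply: deriv_Th.
  move=> a.
  under eq_bigr do under eq_bigr do rewrite mxB_entry mulrBr.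
  under eq_bigr do rewrite sumrB.
  rewrite sumrB hTh trTh -hTr mxE.
  by field; rewrite hnC.
move=> G g -> x a b.
rewrite /ThetaOp /applyOp (theta_expand phi (Theta f g) x a b).
by apply: big1 => l _; rewrite hTh (deriv_Th hC hN hN2 hJ) scale0r.
Qed.
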